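(* In the setting below, the subgroup $H_M$ contains the commutator subgroup $[G_M,G_M]$, and the quotient $H_M/[G_M,G_M]$ is finite.
   Context: Let $n\ge 1$ and let $M=(m_{ij})\in SL(2n+1,\mathbb Z)$. Assume that $M$ has exactly one real eigenvalue $\alpha$, that $\alpha>0$, $\alpha\neq 1$, that $\alpha$ is a simple eigenvalue, and that the remaining eigenvalues are $\beta_1,\dots,\beta_k,\bar\beta_1,\dots,\bar\beta_k$ with $\mathrm{Im}\,\beta_j>0$. Let $W\subset\mathbb C^{2n+1}$ be the direct sum of the generalized eigenspaces of $M$ for $\beta_1,\dots,\beta_k$ (so $\dim_{\mathbb C}W=n$). Fix a real eigenvector $a=(a^{(1)},\dots,a^{(2n+1)})^\top\in\mathbb R^{2n+1}$ of $M$ for $\alpha$ and a basis $b_1,\dots,b_n$ of $W$, $b_j=(b_j^{(1)},\dots,b_j^{(2n+1)})^\top$, and let $R=(r_{\ell j})\in M_n(\mathbb C)$ be given by $Mb_j=\sum_{\ell=1}^n r_{\ell j}b_\ell$. For $i=1,\dots,2n+1$ put $u_i=(a^{(i)},b_1^{(i)},\dots,b_n^{(i)})^\top\in\mathbb R\times\mathbb C^n$. Let $\mathbb H=\{w\in\mathbb C:\mathrm{Im}\,w>0\}$, and define holomorphic automorphisms of $\mathbb H\times\mathbb C^n$ by $g_0(w,z)=(\alpha w,R^\top z)$ and $g_i(w,z)=(w,z)+u_i$ for $1\le i\le 2n+1$. Let $G_M$ be the group generated by $g_0,\dots,g_{2n+1}$ and $H_M$ the subgroup generated by $g_1,\dots,g_{2n+1}$.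 *)

(* Defs.v *)
From HB Require Import structures.
From mathcomp Require Import all_boot all_order all_algebra.
From mathcomp Require Import complex.
From mathcomp Require Import reals.
Set Implicit Arguments. Unset Strict Implicit. Unset Printing Implicit Defensive.
Import Order.TTheory GRing.Theory Num.Theory.
Local Open Scope ring_scope.
Local Open Scope complex_scope.

Inductive gen_grp (T : Type) (S : (T -> T) -> Prop) : (T -> T) -> Prop :=
| gen_grp_id : gen_grp S id
| gen_grp_in f : S f -> gen_grp S f
| gen_grp_comp f g : gen_grp S f -> gen_grp S g -> gen_grp S (f \o g)
| gen_grp_inv f g : gen_grp S f -> cancel f g -> cancel g f -> gen_grp S g.

Definition commutator_grp (T : Type) (G : (T -> T) -> Prop) : (T -> T) -> Prop :=
  gen_grp (fun c => exists f g fi gi, [/\ G f, G g,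
             [/\ cancel f fi, cancel fi f, cancel g gi & cancel gi g]
             & c = fi \o gi \o f \o g]).

Section Setting.
Variable R : realType.
Local Notation C := R[i].

Definition UHP := {w : C | 0 < complex.Im w}.
Definition Xsp (n : nat) := (UHP * 'cV[C]_n)%type.

Lemma UHP_scale (al : R) (w : UHP) : 0 < al -> 0 < complex.Im (al%:C * val w).
Proof.
move=> hal; case: w => [[x y]] /= hy.
rewrite /= mul0r addr0; exact: mulr_gt0.
Qed.

Lemma UHP_shift (t : R) (w : UHP) : 0 < complex.Im (val w + t%:C).
Proof. by case: w => [[x y]] /= hy; rewrite addr0. Qed.

Definition g0 (n : nat) (al : R) (hal : 0 < al) (Rm : 'M[C]_n) : Xsp n -> Xsp n :=
  fun p => (exist _ (al%:C * val p.1) (UHP_scale p.1 hal), Rm^T *m p.2).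

Definition gi (m n : nat) (a : 'cV[R]_m) (b : 'M[C]_(m, n)) (i : 'I_m)
  : Xsp n -> Xsp n :=
  fun p => (exist _ (val p.1 + (a i 0)%:C) (UHP_shift (a i 0) p.1),
            p.2 + (row i b)^T).

Definition gen_eigvec (m : nat) (A : 'M[C]_m) (be : C) (v : 'cV[C]_m) : Prop :=
  exists k : nat, (A - be%:M) ^+ k *m v = 0.

(* W = direct sum of the generalized eigenspaces of A for the eigenvalues
   with positive imaginary part: v is a finite sum of generalized eigenvectors
   for such eigenvalues. *)
Definition inW (m : nat) (A : 'M[C]_m) (v : 'cV[C]_m) : Prop :=
  exists (k : nat) (bes : 'I_k -> C) (vs : 'I_k -> 'cV[C]_m),
    (forall j, [/\ eigenvalue A (bes j), 0 < complex.Im (bes j) & gen_eigvec A (bes j) (vs j)])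
    /\ v = \sum_(j < k) vs j.

End Setting.

(* Main.v *)
Require Import Defs.
From HB Require Import structures.
From mathcomp Require Import all_boot all_order all_algebra.
From mathcomp Require Import complex.
From mathcomp Require Import reals.
From mathcomp Require Import boolp zify.
Import Order.TTheory GRing.Theory Num.Theory.
Local Open Scope ring_scope.
Local Open Scope complex_scope.

Set Implicit Arguments. Unset Strict Implicit. Unset Printing Implicit Defensive.

Section Abs.
Variables (X : Type) (m : nat) (T : 'cV[int]_m -> X -> X) (P Pi : X -> X)
  (A N : 'M[int]_m).
Hypotheses (T0 : T 0 = id) (TD : forall u v, T (u + v) = T u \o T v)
  (PT : forall k, P \o T k = T (A *m k) \o P) (AN : A *m N = 1%:M)
  (PK : cancel P Pi) (PiK : cancel Pi P).

Lemma TP k : T k \o P = P \o T (N *m k).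
Proof. by rewrite PT mulmxA AN mul1mx. Qed.

Lemma TK v : cancel (T v) (T (- v)).
Proof. by move=> x; rewrite -[T (-v) _]/((T (-v) \o T v) x) -TD addNr T0. Qed.

Lemma TKV v : cancel (T (- v)) (T v).
Proof. by move=> x; rewrite -[T v _]/((T v \o T (-v)) x) -TD addrN T0. Qed.

Definition Pn p := iter p P.
Arguments Pn : simpl never.
Lemma PnSr p x : Pn p.+1 x = Pn p (P x). Proof. by rewrite /Pn iterSr. Qed.
Lemma PnS p x : Pn p.+1 x = P (Pn p x). Proof. by []. Qed.
Lemma Pn_add p q x : Pn (p + q) x = Pn p (Pn q x).
Proof. by rewrite /Pn iterD. Qed.


Lemma TPn p k : exists k', T k \o Pn p = Pn p \o T k'.
Proof.
elim: p k => [|p IH] k; first by exists k.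
have [k' e] := IH k; exists (N *m k'); apply: funext => x /=.
rewrite !PnSr.
have := congr1 (fun f => f (P x)) e => /= ->.
by have := congr1 (fun f => f x) (TP k') => /= ->.
Qed.

Lemma PnT p k : exists k', Pn p \o T k = T k' \o Pn p.
Proof.
elim: p k => [|p IH] k; first by exists k.
have [k' e] := IH k; exists (A *m k'); apply: funext => x /=.
rewrite PnS.
have := congr1 (fun f => f x) e => /= ->.
by have := congr1 (fun f => f (Pn p x)) (PT k') => /= ->.
Qed.

Definition Inv3 f k p q := f \o Pn q = T k \o Pn p.

Lemma Inv3_comp f g k l p q p' q' : Inv3 f k p q -> Inv3 g l p' q' ->
  exists k', Inv3 (f \o g) k' (p + p') (q' + q).
Proof.
rewrite /Inv3 => ef eg.
have [l' el'] := TPn q l.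
have [l'' el''] := PnT p l'.
exists (k + l''); apply: funext => x /=.
rewrite Pn_add.
have := congr1 (fun f => f (Pn q x)) eg => /= ->.
rewrite -Pn_add addnC Pn_add.
have := congr1 (fun f => f (Pn p' x)) el' => /= ->.
have := congr1 (fun f => f (T l' (Pn p' x))) ef => /= ->.
have := congr1 (fun f => f (Pn p' x)) el'' => /= ->.
by rewrite Pn_add TD.
Qed.

Lemma Inv3_inv f g k p q : Inv3 f k p q -> cancel f g -> cancel g f ->
  exists k', Inv3 g k' q p.
Proof.
rewrite /Inv3 => ef fK gK.
have [k' ek'] := TPn p k.
have e1 : g \o Pn p \o T k' = Pn q.
  apply: funext => x /=.
  have := congr1 (fun f => f x) ek' => /= <-.
  have := congr1 (fun f => f x) ef => /= <-.
  by rewrite fK.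
have [k'' ek''] := PnT q (- k').
exists k''; apply: funext => x /=.
have := congr1 (fun f => f x) ek'' => /= <-.
have := congr1 (fun f => f (T (- k') x)) e1 => /= <-.
by rewrite TKV.
Qed.

Lemma PnPi s x : Pn s (iter s Pi x) = x.
Proof.
elim: s x => [|s IH] x //=.
by rewrite PnSr /= PiK IH.
Qed.

Lemma Inv3_eq f k s : Inv3 f k s s -> f = T k.
Proof.
move=> e; apply: funext => x.
rewrite -(PnPi s x).
by have := congr1 (fun f => f (iter s Pi x)) e.
Qed.

Lemma gen_T (S : (X -> X) -> Prop) : (forall f, S f -> exists k, f = T k) ->
  forall f, gen_grp S f -> exists k, f = T k.
Proof.
move=> hS f; elim => {f}.
- by exists 0; rewrite T0.
- exact: hS.
- by move=> f g _ [k ->] _ [l ->]; exists (k + l); rewrite TD.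
- move=> f g _ [k ->] fK gK; exists (- k); apply: funext => x.
  by rewrite -{1}(TKV k x) fK.
Qed.

Lemma T_gen (S : (X -> X) -> Prop) : (forall i, S (T (delta_mx i 0))) ->
  forall k, gen_grp S (T k).
Proof.
move=> hS k.
have hN v : gen_grp S (T v) -> gen_grp S (T (- v)).
  by move=> h; apply: gen_grp_inv h (TK v) (TKV v).
have hP v p : gen_grp S (T v) -> gen_grp S (T ((Posz p) *: v)).
  move=> h; elim: p => [|p IH]; first by rewrite scale0r T0; apply: gen_grp_id.
  by rewrite intS scalerDl scale1r TD; apply: gen_grp_comp.
have hZ v z : gen_grp S (T v) -> gen_grp S (T (z *: v)).
  case: z => p h; first exact: hP.
  by rewrite NegzE scaleNr; apply: hN; apply: hP.
rewrite (matrix_sum_delta k).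
apply: (big_ind (fun v => gen_grp S (T v))).
- by rewrite T0; apply: gen_grp_id.
- by move=> u v hu hv; rewrite TD; apply: gen_grp_comp.
move=> i _; rewrite big_ord1; apply: hZ; exact: gen_grp_in.
Qed.


Lemma gen_Inv (S : (X -> X) -> Prop) :
  (forall f, S f -> exists k p q, Inv3 f k p q) ->
  forall f, gen_grp S f -> exists k p q, Inv3 f k p q.
Proof.
move=> hS f; elim => {f}.
- by exists 0, 0%N, 0%N; rewrite /Inv3 T0.
- exact: hS.
- move=> f g _ [k [p [q ef]]] _ [l [p' [q' eg]]].
  have [k' e] := Inv3_comp ef eg; by exists k', (p + p')%N, (q' + q)%N.
- move=> f g _ [k [p [q ef]]] fK gK.
  have [k' e] := Inv3_inv ef fK gK; by exists k', q, p.
Qed.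

Lemma comm_T (S : (X -> X) -> Prop) :
  (forall f, S f -> exists k p q, Inv3 f k p q) ->
  forall c, commutator_grp (gen_grp S) c -> exists k, c = T k.
Proof.
move=> hS; apply: gen_T => c [f [g [fi [gi [Gf Gg [fK fiK gK giK] ->]]]]].
have [k [p [q ef]]] := gen_Inv hS Gf.
have [k2 [p2 [q2 eg]]] := gen_Inv hS Gg.
have [k1 efi] := Inv3_inv ef fK fiK.
have [k3 egi] := Inv3_inv eg gK giK.
have [l1 e1] := Inv3_comp efi egi.
have [l2 e2] := Inv3_comp e1 ef.
have [l3 e3] := Inv3_comp e2 eg.
have E : (q + q2 + p + p2 = q2 + (q + (p2 + p)))%N by lia.
rewrite E in e3; exists l3; exact: Inv3_eq e3.
Qed.

Lemma comm_gen (S : (X -> X) -> Prop) : gen_grp S P ->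
  (forall v, gen_grp S (T v)) ->
  forall v, commutator_grp (gen_grp S) (T (N *m v - v)).
Proof.
move=> GP GT v; apply: gen_grp_in.
exists (T v), P, (T (- v)), Pi; split; [exact: GT | exact: GP | split; [exact: TK|exact: TKV|exact: PK|exact: PiK] | ].
apply: funext => x /=.
have := congr1 (fun f => f x) (TP v) => /= ->.
by rewrite PK -[RHS]/((T (- v) \o T (N *m v)) x) -TD addrC.
Qed.

End Abs.

Set Implicit Arguments. Unset Strict Implicit. Unset Printing Implicit Defensive.

Lemma mapM_int (F : comNzRingType) p q r (A : 'M[int]_(p, q)) (B : 'M[int]_(q, r)) :
  map_mx (fun x : int => x%:~R : F) (A *m B) =
  map_mx (fun x : int => x%:~R : F) A *m map_mx (fun x : int => x%:~R : F) B.
Proof. exact: map_mxM. Qed.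

Section Conc.
Variables (R : realType) (m n : nat) (a : 'cV[R]_m) (b : 'M[R[i]]_(m, n)).

Definition Tr (k : 'cV[int]_m) : Xsp R n -> Xsp R n := fun p =>
  (exist _ (val p.1 + ((a^T *m map_mx (fun x : int => x%:~R : R) k) 0 0)%:C)
     (UHP_shift ((a^T *m map_mx (fun x : int => x%:~R : R) k) 0 0) p.1),
   p.2 + b^T *m map_mx (fun x : int => x%:~R : R[i]) k).

Lemma Xsp_eq (p q : Xsp R n) : val p.1 = val q.1 -> p.2 = q.2 -> p = q.
Proof.
case: p => [[w hw] z]; case: q => [[w' hw'] z'] /= e1 e2; subst.
by congr pair; congr exist; apply: bool_irrelevance.
Qed.

Lemma Tr0 : Tr 0 = id.
Proof.
apply: funext => p; apply: Xsp_eq => /=; first by rewrite map_mx0 mulmx0 mxE addr0.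
by rewrite map_mx0 mulmx0 addr0.
Qed.

Lemma TrD u v : Tr (u + v) = Tr u \o Tr v.
Proof.
apply: funext => p; apply: Xsp_eq => /=.
  by rewrite map_mxD mulmxDr mxE rmorphD -addrA; congr (_ + _); apply: addrC.
by rewrite map_mxD mulmxDr -addrA; congr (_ + _); apply: addrC.
Qed.

Lemma Tr_delta i : Tr (delta_mx i 0) = gi a b i.
Proof.
apply: funext => p; apply: Xsp_eq => /=.
  by rewrite map_delta_mx -colE !mxE.
by rewrite map_delta_mx -colE tr_row.
Qed.

Variables (M : 'M[int]_m) (al : R) (hal : 0 < al) (Rm : 'M[R[i]]_n).
Hypotheses (hMa : map_mx (fun x : int => x%:~R : R) M *m a = al *: a)
  (hMb : map_mx (fun x : int => x%:~R : R[i]) M *m b = b *m Rm).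

Lemma g0Tr k : g0 hal Rm \o Tr k = Tr (M^T *m k) \o g0 hal Rm.
Proof.
apply: funext => p; apply: Xsp_eq => /=.
  rewrite mulrDr; congr (_ + _).
  rewrite -rmorphM; congr (_ %:C).
  by rewrite mapM_int -map_trmx mulmxA -trmx_mul hMa linearZ /= -scalemxAl [RHS]mxE.
by rewrite mulmxDr mapM_int -map_trmx !mulmxA -!trmx_mul hMb.
Qed.


Hypothesis hdet : \det M = 1.

Lemma AN : M^T *m \adj (M^T) = 1%:M.
Proof. by rewrite mul_mx_adj det_tr hdet. Qed.

Hypothesis hb : forall c : 'cV[R[i]]_n, b *m c = 0 -> c = 0.

Lemma exQ : exists Q : 'M[R[i]]_n, Rm^T *m Q = 1%:M /\ Q *m Rm^T = 1%:M.
Proof.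
have : row_free b^T.
  apply: inj_row_free => v hv; apply: trmx_inj; rewrite trmx0; apply: hb.
  by rewrite -[b]trmxK -trmx_mul hv trmx0.
case/row_freeP => B hB.
set Q := b^T *m map_mx (fun x : int => x%:~R : R[i]) (\adj M^T) *m B.
have e : Rm^T *m Q = 1%:M.
  rewrite /Q !mulmxA -trmx_mul -hMb trmx_mul -!mulmxA (mulmxA (_^T)).
  by rewrite map_trmx -mulmxA (mulmxA (map_mx _ (M^T))) -mapM_int AN map_mx1 mul1mx hB.
by exists Q; split => //; apply: mulmx1C.
Qed.


Hypotheses (heig : forall x : R,
   eigenvalue (map_mx (fun x : int => x%:~R : R[i]) M) x%:C -> x = al)
  (hal1 : al != 1).

Lemma detD : \det (\adj M^T - 1%:M) != 0.
Proof.
have e1 : (\adj M^T - 1%:M) *m M^T = (1%:M - M)^T.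
  by rewrite mulmxBl mul_adj_mx det_tr hdet mul1mx linearB /= tr_scalar_mx.
have e2 : \det (\adj M^T - 1%:M) = \det (1%:M - M).
  by rewrite -(det_tr (1%:M - M)) -e1 det_mulmx det_tr hdet mulr1.
rewrite e2; apply/negP => /eqP h.
have h2 : \det (map_mx (fun x : int => x%:~R : R[i]) (1%:M - M)) = 0.
  by rewrite (det_map_mx (intr : {rmorphism int -> R[i]})) h rmorph0.
move/eqP: h2; case/det0P => v vn0 hv.
have : eigenvalue (map_mx (fun x : int => x%:~R : R[i]) M) (1:R)%:C.
  apply/eigenvalueP; exists v => //.
  move: hv; rewrite map_mxB (map_mx1 (intr : {rmorphism int -> R[i]})) mulmxBr mulmx1.
  by move/eqP; rewrite subr_eq0 => /eqP <-; rewrite scale1r.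
by move/heig => e; move: hal1; rewrite -e eqxx.
Qed.

End Conc.

Unset Implicit Arguments. Set Strict Implicit. Set Printing Implicit Defensive.

Theorem corollary2p6 (R : realType) (n : nat) (M : 'M[int]_(2 * n + 1))
  (al : R) (a : 'cV[R]_(2 * n + 1)) (b : 'M[R[i]]_(2 * n + 1, n))
  (Rm : 'M[R[i]]_n) (hal : 0 < al) :
  let MC := map_mx (fun x : int => x%:~R : R[i]) M in
  let MR := map_mx (fun x : int => x%:~R : R) M in
  \det M = 1 ->
  (* alpha is an eigenvalue of M, the only real one, alpha > 0, alpha <> 1, simple *)
  eigenvalue MC al%:C ->
  (forall x : R, eigenvalue MC x%:C -> x = al) ->
  al != 1 ->
  mup al%:C (char_poly MC) = 1%N ->
  (* a is a real eigenvector for alpha *)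
  a != 0 -> MR *m a = al *: a ->
  (* columns b_1..b_n of b form a basis of W *)
  (forall j : 'I_n, inW MC (col j b)) ->
  (forall c : 'cV[R[i]]_n, b *m c = 0 -> c = 0) ->
  (forall v, inW MC v -> exists c : 'cV[R[i]]_n, v = b *m c) ->
  (* R = (r_lj) with M b_j = sum_l r_lj b_l *)
  MC *m b = b *m Rm ->
  let GM := gen_grp (fun f => f = g0 hal Rm \/ exists i, f = gi a b i) in
  let HM := gen_grp (fun f => exists i, f = gi a b i) in
  (forall c, commutator_grp GM c -> HM c) /\
  exists (k : nat) (reps : 'I_k -> (Xsp R n -> Xsp R n)),
    (forall j, HM (reps j)) /\
    forall h, HM h -> exists j, exists c, commutator_grp GM c /\ h = reps j \o c.
Proof.
move=> MC MR hdet _ heig hal1 _ _ hMa _ hb _ hMb GM HM.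
have [Q [RQ QR]] := exQ hMb hdet hb.
have halV : 0 < al^-1 by rewrite invr_gt0.
pose Pi := fun p : Xsp R n =>
  (exist (fun w : R[i] => 0 < complex.Im w) (al^-1%:C * val p.1) (UHP_scale p.1 halV),
   Q *m p.2).
have al0 : al != 0 by rewrite gt_eqF.
have PK : cancel (g0 hal Rm) Pi.
  move=> p; apply: Xsp_eq => /=; last by rewrite mulmxA QR mul1mx.
  by rewrite mulrA -rmorphM mulVf // mul1r.
have PiK : cancel Pi (g0 hal Rm).
  move=> p; apply: Xsp_eq => /=; last by rewrite mulmxA RQ mul1mx.
  by rewrite mulrA -rmorphM mulfV // mul1r.
have T0 := Tr0 a b.
have TD := @TrD R _ n a b.
have PT := g0Tr hal hMa hMb.
have hAN := AN hdet.
have hSG : forall f, (f = g0 hal Rm \/ exists i, f = gi a b i) ->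
    exists k p q, Inv3 (Tr a b) (g0 hal Rm) f k p q.
  move=> f [->|[i ->]].
    exists 0, 1%N, 0%N; apply: funext => x /=.
    by rewrite /Inv3 /= T0.
  exists (delta_mx i 0), 0%N, 0%N; rewrite -Tr_delta; apply: funext => x //.
have HT : forall k, HM (Tr a b k).
  by apply: (T_gen T0 TD) => i; exists i; rewrite Tr_delta.
have GT : forall k, GM (Tr a b k).
  by apply: (T_gen T0 TD) => i; right; exists i; rewrite Tr_delta.
have TH : forall h, HM h -> exists k, h = Tr a b k.
  by apply: (gen_T T0 TD) => f [i ->]; exists (delta_mx i 0); rewrite Tr_delta.
split.
  move=> c Hc; have [k ->] := comm_T T0 TD PT hAN PiK hSG Hc; exact: HT.
have GP : GM (g0 hal Rm) by apply: gen_grp_in; left.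
pose N := \adj M^T.
pose D := N - 1%:M.
pose d := \det D.
have dn0 : d != 0 := detD hdet heig hal1.
pose K := `|d|%N.
exists #|{ffun 'I_(2 * n + 1) -> 'I_K}|.
exists (fun j => Tr a b (\col_i ((@enum_val {ffun 'I_(2 * n + 1) -> 'I_K} _ j) i : nat)%:Z)).
split; first by move=> j; apply: HT.
move=> h /TH [l ->].
have hr i : (absz ((l i ord0) %% d)%Z < K)%N.
  have h1 := modz_ge0 (l i ord0) dn0.
  have h2 := ltz_mod (l i ord0) dn0.
  by rewrite -ltz_nat gez0_abs // -abszE.
pose f := [ffun i => Ordinal (hr i)].
exists (enum_rank f).
pose e := \col_i ((l i ord0) %/ d)%Z.
exists (Tr a b (N *m (\adj D *m e) - (\adj D *m e))).
split; first exact: (comm_gen T0 TD PT hAN PK PiK GP GT).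
rewrite enum_rankK -TD; congr (Tr a b _).
have -> : N *m (\adj D *m e) - \adj D *m e = d *: e.
  by rewrite -[X in _ - X]mul1mx -mulmxBl mulmxA mul_mx_adj mul_scalar_mx.
apply/matrixP => i j; rewrite ord1 !mxE ffunE /= gez0_abs; last exact: modz_ge0.
by rewrite addrC mulrC -divz_eq.
Qed.
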